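(* Assume Assumptions 1, 2 and 3 and $0<P(Z=1\mid R=r)<1$, $P(R=r)>0$ for $r=1,2$. Write $\omega_{ys\mid zr}=P(Y=y,S=s\mid Z=z,R=r)$ and $\delta_{zu}=P(Y=1\mid Z=z,U=u)$. Then $\pi_{\bar{s}\bar{s},r}=P(S=0\mid Z=1,R=r)$, $\pi_{ss,r}=P(S=1\mid Z=0,R=r)$ and $\pi_{s\bar{s},r}=1-\pi_{ss,r}-\pi_{\bar{s}\bar{s},r}$. If $\pi_{ss,1}\pi_{s\bar{s},2}-\pi_{ss,2}\pi_{s\bar{s},1}\neq 0$, then $$\delta_{1,ss}=\frac{\omega_{11\mid 11}\pi_{s\bar{s},2}-\omega_{11\mid 12}\pi_{s\bar{s},1}}{\pi_{ss,1}\pi_{s\bar{s},2}-\pi_{ss,2}\pi_{s\bar{s},1}},\qquad \delta_{1,s\bar{s}}=\frac{\omega_{11\mid 12}\pi_{ss,1}-\omega_{11\mid 11}\pi_{ss,2}}{\pi_{ss,1}\pi_{s\bar{s},2}-\pi_{ss,2}\pi_{s\bar{s},1}}.$$ If $\pi_{s\bar{s},1}\pi_{\bar{s}\bar{s},2}-\pi_{s\bar{s},2}\pi_{\bar{s}\bar{s},1}\neq 0$, then $$\delta_{0,s\bar{s}}=\frac{\omega_{10\mid 01}\pi_{\bar{s}\bar{s},2}-\omega_{10\mid 02}\pi_{\bar{s}\bar{s},1}}{\pi_{s\bar{s},1}\pi_{\bar{s}\bar{s},2}-\pi_{s\bar{s},2}\pi_{\bar{s}\bar{s},1}},\qquad \delta_{0,\bar{s}\bar{s}}=\frac{\omega_{10\mid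 02}\pi_{s\bar{s},1}-\omega_{10\mid 01}\pi_{s\bar{s},2}}{\pi_{s\bar{s},1}\pi_{\bar{s}\bar{s},2}-\pi_{s\bar{s},2}\pi_{\bar{s}\bar{s},1}}.$$ (Here $\delta_{1,ss},\delta_{1,s\bar{s}}$, resp. $\delta_{0,s\bar{s}},\delta_{0,\bar{s}\bar{s}}$, are assumed defined, i.e. the corresponding strata have positive probability.)
   Context: Setting: $N_R=2$ trials. A unit is described by $(R,Z,S(1),S(0),Y(1),Y(0))$ with $R\in\{1,2\}$ the trial, $Z\in\{0,1\}$ the treatment, $S(z),Y(z)\in\{0,1\}$ potential surrogate and endpoint. Observed $S=ZS(1)+(1-Z)S(0)$, $Y=ZY(1)+(1-Z)Y(0)$. $U=(S(1),S(0))$ with values $(1,1),(1,0),(0,1),(0,0)$ labeled $ss,s\bar{s},\bar{s}s,\bar{s}\bar{s}$; $\pi_{ur}=P(U=u\mid R=r)$. Assumption 1 (randomization): $Z\perp\!\!\!\perp\{S(1),S(0),Y(1),Y(0)\}\mid R$. Assumption 2 (monotonicity): $S(1)\ge S(0)$ almost surely. Assumption 3 (homogeneity): $R\perp\!\!\!\perp Y(z)\mid U$ for $z=0,1$; under Assumptions 1 and 3, $P(Y=1\mid Z=z,U=u,R=r)=P(Y=1\mid Z=z,U=u)$. *)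

(* Defs.v *)
(* a discrete joint law of (R,Z,S(1),S(0),Y(1),Y(0)) is a pmf
   on the finite type of its 2*2*2*2*2*2 = 64 possible values. *)
From HB Require Import structures.
From mathcomp Require Import all_boot all_order all_algebra.
Set Implicit Arguments. Unset Strict Implicit. Unset Printing Implicit Defensive.
Import Order.TTheory GRing.Theory Num.Theory.
Local Open Scope ring_scope.

(* outcome = (((((trial2?, Z), S(1)), S(0)), Y(1)), Y(0)); booleans encode 0/1 *)
Definition outcome := (bool * bool * bool * bool * bool * bool)%type.

Definition Rv (w : outcome) : nat := if w.1.1.1.1.1 then 2%N else 1%N.
Definition Zv (w : outcome) : bool := w.1.1.1.1.2.
Definition S1v (w : outcome) : bool := w.1.1.1.2.
Definition S0v (w : outcome) : bool := w.1.1.2.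
Definition Y1v (w : outcome) : bool := w.1.2.
Definition Y0v (w : outcome) : bool := w.2.

Definition Sz (z : bool) (w : outcome) : bool := if z then S1v w else S0v w.
Definition Yz (z : bool) (w : outcome) : bool := if z then Y1v w else Y0v w.
Definition Sobs (w : outcome) : bool := Sz (Zv w) w.
Definition Yobs (w : outcome) : bool := Yz (Zv w) w.

Definition Uv (w : outcome) : bool * bool := (S1v w, S0v w).
Definition u_ss : bool * bool := (true, true).
Definition u_ssbar : bool * bool := (true, false).
Definition u_sbars : bool * bool := (false, true).
Definition u_sbarsbar : bool * bool := (false, false).

Definition pot (w : outcome) : bool * bool * bool * bool :=
  (S1v w, S0v w, Y1v w, Y0v w).

Section Prob.
Variable K : realFieldType.
Variable p : outcome -> K.

Definition is_pmf : Prop := (forall w, 0 <= p w) /\ \sum_(w : outcome) p w = 1.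

Definition Prob (A : pred outcome) : K := \sum_(w : outcome | A w) p w.

Definition CondP (A B : pred outcome) : K :=
  Prob [pred w | A w && B w] / Prob B.

(* Assumption 1: Z independent of (S(1),S(0),Y(1),Y(0)) given R *)
Definition randomization : Prop :=
  forall (r : nat) (z : bool) (v : bool * bool * bool * bool),
    Prob [pred w | (Zv w == z) && (pot w == v) && (Rv w == r)] * Prob [pred w | Rv w == r]
    = Prob [pred w | (Zv w == z) && (Rv w == r)] * Prob [pred w | (pot w == v) && (Rv w == r)].

(* Assumption 2: S(1) >= S(0) almost surely *)
Definition monotonicity : Prop := Prob [pred w | ~~ S1v w && S0v w] = 0.

(* Assumption 3: R independent of Y(z) given U, for z = 0,1 *)
Definition homogeneity : Prop :=
  forall (z : bool) (r : nat) (y : bool) (u : bool * bool),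
    Prob [pred w | (Rv w == r) && (Yz z w == y) && (Uv w == u)] * Prob [pred w | Uv w == u]
    = Prob [pred w | (Rv w == r) && (Uv w == u)] * Prob [pred w | (Yz z w == y) && (Uv w == u)].

Definition piU (u : bool * bool) (r : nat) : K :=
  CondP [pred w | Uv w == u] [pred w | Rv w == r].

Definition omega (y s z : bool) (r : nat) : K :=
  CondP [pred w | (Yobs w == y) && (Sobs w == s)] [pred w | (Zv w == z) && (Rv w == r)].

Definition delta (z : bool) (u : bool * bool) : K :=
  CondP [pred w | Yobs w] [pred w | (Zv w == z) && (Uv w == u)].

End Prob.

(* Main.v *)
Require Import Defs.
From HB Require Import structures.
From mathcomp Require Import all_boot all_order all_algebra.
From mathcomp Require Import ring lra.
Import Order.TTheory GRing.Theory Num.Theory.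
Set Implicit Arguments. Unset Strict Implicit. Unset Printing Implicit Defensive.
Local Open Scope ring_scope.

Ltac ext_tac := move=> ? /=;
  repeat match goal with |- context [Rv ?w == ?r] => is_var r; case: (Rv w == r) end;
  match goal with |- context [Sz _ ?w] => case: w => [[[[[[] []] []] []] []] []]
                | |- context [Zv ?w] => case: w => [[[[[[] []] []] []] []] []]
                | |- context [Uv ?w] => case: w => [[[[[[] []] []] []] []] []]
                | |- context [Yz _ ?w] => case: w => [[[[[[] []] []] []] []] []]
                | |- context [S1v ?w] => case: w => [[[[[[] []] []] []] []] []]
                | |- context [Rv ?w] => case: w => [[[[[[] []] []] []] []] []]
  end; compute; done.

Lemma Prob_ext (K : realFieldType) (p : outcome -> K) (A B : pred outcome) :
  A =1 B -> Prob p A = Prob p B.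
Proof. by move=> h; apply: eq_bigl. Qed.

Lemma Prob_ge0 (K : realFieldType) (p : outcome -> K) (A : pred outcome) :
  is_pmf p -> 0 <= Prob p A.
Proof. by move=> [h _]; apply: sumr_ge0. Qed.

Lemma Prob_split (K : realFieldType) (p : outcome -> K) (A B : pred outcome) :
  Prob p A = Prob p [pred w | A w && B w] + Prob p [pred w | A w && ~~ B w].
Proof. by rewrite /Prob (bigID B). Qed.

Lemma Prob_le (K : realFieldType) (p : outcome -> K) (A B : pred outcome) :
  is_pmf p -> Prob p [pred w | A w && B w] <= Prob p A.
Proof.
move=> hp; rewrite (Prob_split p A B) lerDl; exact: Prob_ge0.
Qed.

Lemma Prob_part (K : realFieldType) (p : outcome -> K) (J : finType) (f : outcome -> J)
  (A : pred outcome) (Q : pred J) :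
  Prob p [pred w | A w && Q (f w)] = \sum_(v | Q v) Prob p [pred w | A w && (f w == v)].
Proof.
rewrite /Prob (partition_big f Q) => [|w /andP[]//].
apply: eq_bigr => v Qv; apply: eq_bigl => w /=.
by case: eqP => [->|]; rewrite ?Qv ?andbT ?andbF.
Qed.

Lemma rand_gen (K : realFieldType) (p : outcome -> K) (Q : pred (bool*bool*bool*bool)) z r :
  randomization p ->
  Prob p [pred w | (Zv w == z) && Q (pot w) && (Rv w == r)] * Prob p [pred w | Rv w == r]
  = Prob p [pred w | (Zv w == z) && (Rv w == r)] * Prob p [pred w | Q (pot w) && (Rv w == r)].
Proof.
move=> hr.
have e1 : Prob p [pred w | (Zv w == z) && Q (pot w) && (Rv w == r)] =
  Prob p [pred w | ((Zv w == z) && (Rv w == r)) && Q (pot w)].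
  by apply: Prob_ext => w /=; rewrite -andbA [Q _ && _]andbC andbA.
have e2 : Prob p [pred w | Q (pot w) && (Rv w == r)] =
  Prob p [pred w | (Rv w == r) && Q (pot w)].
  by apply: Prob_ext => w /=; rewrite andbC.
rewrite e1 e2 !Prob_part mulr_suml mulr_sumr; apply: eq_bigr => v _.
have -> : Prob p [pred w | (Zv w == z) && (Rv w == r) && (pot w == v)] =
  Prob p [pred w | (Zv w == z) && (pot w == v) && (Rv w == r)].
  by apply: Prob_ext => w /=; case: (Zv w == z); case: (Rv w == r); case: (pot w == v).
have -> : Prob p [pred w | (Rv w == r) && (pot w == v)] =
  Prob p [pred w | (pot w == v) && (Rv w == r)].
  by apply: Prob_ext => w /=; rewrite andbC.
exact: hr.
Qed.

Lemma mono0 (K : realFieldType) (p : outcome -> K) (B : pred outcome) :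
  is_pmf p -> monotonicity p -> Prob p [pred w | (~~ S1v w && S0v w) && B w] = 0.
Proof.
move=> hp hm; have := Prob_split p [pred w | ~~ S1v w && S0v w] B.
rewrite hm => h.
have h1 := Prob_ge0 [pred w | (~~ S1v w && S0v w) && B w] hp.
have h2 := Prob_ge0 [pred w | (~~ S1v w && S0v w) && ~~ B w] hp.
move: h h1 h2 => /=.
set x := Prob _ _; set y := Prob _ _ => h h1 h2. lra.
Qed.

Definition PR (K : realFieldType) (p : outcome -> K) r := Prob p [pred w | Rv w == r].
Definition PZR (K : realFieldType) (p : outcome -> K) z r :=
  Prob p [pred w | (Zv w == z) && (Rv w == r)].
Definition PU (K : realFieldType) (p : outcome -> K) u r :=
  Prob p [pred w | (Uv w == u) && (Rv w == r)].
Definition dd (K : realFieldType) (p : outcome -> K) z u :=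
  Prob p [pred w | Yz z w && (Uv w == u)] / Prob p [pred w | Uv w == u].

Lemma piU_eq (K : realFieldType) (p : outcome -> K) u r : piU p u r = PU p u r / PR p r.
Proof. by []. Qed.

Lemma sumPU (K : realFieldType) (p : outcome -> K) r :
  is_pmf p -> monotonicity p ->
  PR p r = PU p u_ss r + PU p u_ssbar r + PU p u_sbarsbar r.
Proof.
move=> hp hm.
rewrite /PR (Prob_split p _ S1v).
rewrite (Prob_split p [pred w | (Rv w == r) && S1v w] S0v).
rewrite (Prob_split p [pred w | (Rv w == r) && ~~ S1v w] S0v).
have h0 := mono0 [pred w | Rv w == r] hp hm.
transitivity (PU p u_ss r + PU p u_ssbar r +
  (Prob p [pred w | (~~ S1v w && S0v w) && [pred w | Rv w == r] w] + PU p u_sbarsbar r)).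
  by congr (_ + _ + (_ + _)); apply: Prob_ext; ext_tac.
by rewrite h0 add0r.
Qed.

Lemma hom_eq (K : realFieldType) (p : outcome -> K) z u r :
  homogeneity p -> Prob p [pred w | Uv w == u] != 0 ->
  Prob p [pred w | (Rv w == r) && (Yz z w == true) && (Uv w == u)] = PU p u r * dd p z u.
Proof.
move=> hh nz; apply: (mulIf nz); rewrite hh /dd mulrA divfK //.
have -> : PU p u r = Prob p [pred w | (Rv w == r) && (Uv w == u)].
  by apply: Prob_ext => w /=; rewrite andbC.
congr (_ * _); apply: Prob_ext => w /=; by rewrite eqb_id.
Qed.

Lemma alg1 (F : fieldType) (a1 b1 a2 b2 P1 P2 d1 d2 : F) :
  P1 != 0 -> P2 != 0 -> a1/P1*(b2/P2) - a2/P2*(b1/P1) != 0 ->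
  d1 = ((a1*d1+b1*d2)/P1*(b2/P2) - (a2*d1+b2*d2)/P2*(b1/P1)) / (a1/P1*(b2/P2) - a2/P2*(b1/P1))
  /\ d2 = ((a2*d1+b2*d2)/P2*(a1/P1) - (a1*d1+b1*d2)/P1*(a2/P2)) / (a1/P1*(b2/P2) - a2/P2*(b1/P1)).
Proof.
move=> h1 h2 hD; split; apply: (mulIf hD); rewrite divfK //; field; by rewrite h1 h2.
Qed.

Lemma part1a (K : realFieldType) (p : outcome -> K) r :
  is_pmf p -> randomization p -> monotonicity p -> PR p r != 0 -> PZR p true r != 0 ->
  piU p u_sbarsbar r = CondP p [pred w | ~~ Sobs w] [pred w | Zv w && (Rv w == r)].
Proof.
move=> hp hr hm nR nZ; rewrite piU_eq /CondP.
have hA := rand_gen (fun v : bool*bool*bool*bool => ~~ v.1.1.1) true r hr.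
have eN : Prob p [pred w | [pred w | ~~ Sobs w] w && [pred w | Zv w && (Rv w == r)] w] =
  Prob p [pred w | (Zv w == true) && (fun v : bool*bool*bool*bool => ~~ v.1.1.1) (pot w) && (Rv w == r)].
  by apply: Prob_ext; ext_tac.
have eD : Prob p [pred w | Zv w && (Rv w == r)] = PZR p true r by apply: Prob_ext; ext_tac.
have eM : Prob p [pred w | (fun v : bool*bool*bool*bool => ~~ v.1.1.1) (pot w) && (Rv w == r)]
   = PU p u_sbarsbar r.
  rewrite (Prob_split _ _ S0v). have h0 := mono0 [pred w | Rv w == r] hp hm.
  transitivity (Prob p [pred w | (~~ S1v w && S0v w) && [pred w | Rv w == r] w] + PU p u_sbarsbar r).
    by congr (_ + _); apply: Prob_ext; ext_tac.
  by rewrite h0 add0r.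
rewrite eN eD; move: hA; rewrite eM => hA.
apply/eqP; rewrite eqr_div //; apply/eqP; rewrite hA mulrC //.
Qed.

Lemma part1b (K : realFieldType) (p : outcome -> K) r :
  is_pmf p -> randomization p -> monotonicity p -> PR p r != 0 -> PZR p false r != 0 ->
  piU p u_ss r = CondP p [pred w | Sobs w] [pred w | ~~ Zv w && (Rv w == r)].
Proof.
move=> hp hr hm nR nZ; rewrite piU_eq /CondP.
have hA := rand_gen (fun v : bool*bool*bool*bool => v.1.1.2) false r hr.
have eN : Prob p [pred w | [pred w | Sobs w] w && [pred w | ~~ Zv w && (Rv w == r)] w] =
  Prob p [pred w | (Zv w == false) && (fun v : bool*bool*bool*bool => v.1.1.2) (pot w) && (Rv w == r)].
  by apply: Prob_ext; ext_tac.
have eD : Prob p [pred w | ~~ Zv w && (Rv w == r)] = PZR p false r by apply: Prob_ext; ext_tac.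
have eM : Prob p [pred w | (fun v : bool*bool*bool*bool => v.1.1.2) (pot w) && (Rv w == r)]
   = PU p u_ss r.
  rewrite (Prob_split _ _ S1v). have h0 := mono0 [pred w | Rv w == r] hp hm.
  transitivity (PU p u_ss r + Prob p [pred w | (~~ S1v w && S0v w) && [pred w | Rv w == r] w]).
    by congr (_ + _); apply: Prob_ext; ext_tac.
  by rewrite h0 addr0.
rewrite eN eD; move: hA; rewrite eM => hA.
apply/eqP; rewrite eqr_div //; apply/eqP; rewrite hA mulrC //.
Qed.

Lemma part1c (K : realFieldType) (p : outcome -> K) r :
  is_pmf p -> monotonicity p -> PR p r != 0 ->
  piU p u_ssbar r = 1 - piU p u_ss r - piU p u_sbarsbar r.
Proof.
move=> hp hm nR; rewrite !piU_eq.
move: nR; rewrite (sumPU r hp hm) => nR; field; exact: nR.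
Qed.

Lemma omega1 (K : realFieldType) (p : outcome -> K) r :
  randomization p -> homogeneity p -> PR p r != 0 -> PZR p true r != 0 ->
  Prob p [pred w | Uv w == u_ss] != 0 -> Prob p [pred w | Uv w == u_ssbar] != 0 ->
  omega p true true true r = (PU p u_ss r * dd p true u_ss + PU p u_ssbar r * dd p true u_ssbar) / PR p r.
Proof.
move=> hr hh nR nZ n1 n2; rewrite /omega /CondP.
have hA := rand_gen (fun v : bool*bool*bool*bool => v.1.2 && v.1.1.1) true r hr.
have eN : Prob p [pred w | [pred w | (Yobs w == true) && (Sobs w == true)] w &&
     [pred w | (Zv w == true) && (Rv w == r)] w] =
  Prob p [pred w | (Zv w == true) && (fun v : bool*bool*bool*bool => v.1.2 && v.1.1.1) (pot w) && (Rv w == r)].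
  by apply: Prob_ext; ext_tac.
have eM : Prob p [pred w | (fun v : bool*bool*bool*bool => v.1.2 && v.1.1.1) (pot w) && (Rv w == r)]
   = PU p u_ss r * dd p true u_ss + PU p u_ssbar r * dd p true u_ssbar.
  rewrite -!hom_eq // (Prob_split _ _ S0v).
  by congr (_ + _); apply: Prob_ext; ext_tac.
rewrite eN; move: hA; rewrite eM => hA.
apply/eqP; rewrite eqr_div //; apply/eqP; rewrite hA mulrC //.
Qed.

Lemma omega0 (K : realFieldType) (p : outcome -> K) r :
  randomization p -> homogeneity p -> PR p r != 0 -> PZR p false r != 0 ->
  Prob p [pred w | Uv w == u_ssbar] != 0 -> Prob p [pred w | Uv w == u_sbarsbar] != 0 ->
  omega p true false false r = (PU p u_ssbar r * dd p false u_ssbar + PU p u_sbarsbar r * dd p false u_sbarsbar) / PR p r.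
Proof.
move=> hr hh nR nZ n1 n2; rewrite /omega /CondP.
have hA := rand_gen (fun v : bool*bool*bool*bool => v.2 && ~~ v.1.1.2) false r hr.
have eN : Prob p [pred w | [pred w | (Yobs w == true) && (Sobs w == false)] w &&
     [pred w | (Zv w == false) && (Rv w == r)] w] =
  Prob p [pred w | (Zv w == false) && (fun v : bool*bool*bool*bool => v.2 && ~~ v.1.1.2) (pot w) && (Rv w == r)].
  by apply: Prob_ext; ext_tac.
have eM : Prob p [pred w | (fun v : bool*bool*bool*bool => v.2 && ~~ v.1.1.2) (pot w) && (Rv w == r)]
   = PU p u_ssbar r * dd p false u_ssbar + PU p u_sbarsbar r * dd p false u_sbarsbar.
  rewrite -!hom_eq // (Prob_split _ _ S1v).
  by congr (_ + _); apply: Prob_ext; ext_tac.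
rewrite eN; move: hA; rewrite eM => hA.
apply/eqP; rewrite eqr_div //; apply/eqP; rewrite hA mulrC //.
Qed.

Lemma delta_eq (K : realFieldType) (p : outcome -> K) z u :
  randomization p -> homogeneity p -> PR p 1%N != 0 -> PR p 2%N != 0 ->
  Prob p [pred w | Uv w == u] != 0 -> Prob p [pred w | (Zv w == z) && (Uv w == u)] != 0 ->
  delta p z u = dd p z u.
Proof.
move=> hr hh n1 n2 nU nZU; rewrite /delta /CondP.
pose Qz := fun v : bool*bool*bool*bool => (if z then v.1.2 else v.2) && ((v.1.1.1, v.1.1.2) == u).
pose Q' := fun v : bool*bool*bool*bool => ((v.1.1.1, v.1.1.2) == u).
pose n r := Prob p [pred w | (Zv w == z) && Qz (pot w) && (Rv w == r)].
pose d r := Prob p [pred w | (Zv w == z) && Q' (pot w) && (Rv w == r)].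
have en : Prob p [pred w | [pred w | Yobs w] w && [pred w | (Zv w == z) && (Uv w == u)] w]
   = n 1%N + n 2%N.
  rewrite (Prob_split _ _ [pred w | Rv w == 1%N]) /n /Qz.
  by congr (_ + _); apply: Prob_ext; clear -z u; case: z; case: u => [[] []]; ext_tac.
have ed : Prob p [pred w | (Zv w == z) && (Uv w == u)] = d 1%N + d 2%N.
  rewrite (Prob_split _ _ [pred w | Rv w == 1%N]) /d /Q'.
  by congr (_ + _); apply: Prob_ext; clear -z u; case: z; case: u => [[] []]; ext_tac.
have key r : PR p r != 0 -> n r = d r * dd p z u.
  move=> nr; apply: (mulIf nr).
  rewrite /n /PR (rand_gen Qz z r hr) -mulrA [dd _ _ _ * _]mulrC mulrA /d (rand_gen Q' z r hr).
  rewrite -mulrA; congr (_ * _).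
  have -> : Prob p [pred w | Qz (pot w) && (Rv w == r)] =
     Prob p [pred w | (Rv w == r) && (Yz z w == true) && (Uv w == u)].
    by apply: Prob_ext; rewrite /Qz; clear -z u; case: z; case: u => [[] []]; ext_tac.
  rewrite hom_eq //; congr (_ * _); apply: Prob_ext; rewrite /Q'; clear -u; case: u => [[] []]; ext_tac.
rewrite en ed (key _ n1) (key _ n2) -mulrDl mulrC mulKf //.
by rewrite -ed.
Qed.

Lemma PZ_bounds (K : realFieldType) (p : outcome -> K) r :
  is_pmf p -> 0 < PR p r -> 0 < CondP p [pred w | Zv w] [pred w | Rv w == r] < 1 ->
  0 < PZR p true r /\ 0 < PZR p false r.
Proof.
move=> hp hR; have nR : PR p r != 0 by rewrite gt_eqF.
have -> : CondP p [pred w | Zv w] [pred w | Rv w == r] = PZR p true r / PR p r.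
  by rewrite /CondP; congr (_ / _); apply: Prob_ext; ext_tac.
move=> /andP[h1 h2].
have hs : PR p r = PZR p true r + PZR p false r.
  rewrite /PR (Prob_split _ _ Zv); congr (_ + _); apply: Prob_ext; ext_tac.
move: h2; rewrite ltr_pdivrMr // mul1r => h2.
have h1' : 0 < PZR p true r.
  by rewrite -(divfK nR (PZR p true r)); apply: mulr_gt0.
split=> //; lra.
Qed.

Lemma pos_U (K : realFieldType) (p : outcome -> K) (b : bool) u :
  is_pmf p -> 0 < Prob p [pred w | (Zv w == b) && (Uv w == u)] ->
  Prob p [pred w | Uv w == u] != 0.
Proof.
move=> hp h; rewrite gt_eqF //; apply: (lt_le_trans h).
have := Prob_le [pred w | Uv w == u] [pred w | Zv w == b] hp.
have -> : Prob p [pred w | [pred w | Uv w == u] w && [pred w | Zv w == b] w] =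
   Prob p [pred w | (Zv w == b) && (Uv w == u)] by apply: Prob_ext => w /=; rewrite andbC.
by [].
Qed.

Theorem mainTheorem3 (K : realFieldType) (p : outcome -> K) :
  is_pmf p -> randomization p -> monotonicity p -> homogeneity p ->
  (forall r : nat, (r = 1%N \/ r = 2%N) ->
     0 < CondP p [pred w | Zv w] [pred w | Rv w == r] < 1) ->
  (forall r : nat, (r = 1%N \/ r = 2%N) -> 0 < Prob p [pred w | Rv w == r]) ->
  (forall r : nat, (r = 1%N \/ r = 2%N) ->
     [/\ piU p u_sbarsbar r = CondP p [pred w | ~~ Sobs w] [pred w | Zv w && (Rv w == r)],
         piU p u_ss r = CondP p [pred w | Sobs w] [pred w | ~~ Zv w && (Rv w == r)]
       & piU p u_ssbar r = 1 - piU p u_ss r - piU p u_sbarsbar r])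
  /\
  (piU p u_ss 1%N * piU p u_ssbar 2%N - piU p u_ss 2%N * piU p u_ssbar 1%N != 0 ->
   0 < Prob p [pred w | Zv w && (Uv w == u_ss)] ->
   0 < Prob p [pred w | Zv w && (Uv w == u_ssbar)] ->
   delta p true u_ss =
     (omega p true true true 1%N * piU p u_ssbar 2%N - omega p true true true 2%N * piU p u_ssbar 1%N)
     / (piU p u_ss 1%N * piU p u_ssbar 2%N - piU p u_ss 2%N * piU p u_ssbar 1%N)
   /\
   delta p true u_ssbar =
     (omega p true true true 2%N * piU p u_ss 1%N - omega p true true true 1%N * piU p u_ss 2%N)
     / (piU p u_ss 1%N * piU p u_ssbar 2%N - piU p u_ss 2%N * piU p u_ssbar 1%N))
  /\
  (piU p u_ssbar 1%N * piU p u_sbarsbar 2%N - piU p u_ssbar 2%N * piU p u_sbarsbar 1%N != 0 ->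
   0 < Prob p [pred w | ~~ Zv w && (Uv w == u_ssbar)] ->
   0 < Prob p [pred w | ~~ Zv w && (Uv w == u_sbarsbar)] ->
   delta p false u_ssbar =
     (omega p true false false 1%N * piU p u_sbarsbar 2%N - omega p true false false 2%N * piU p u_sbarsbar 1%N)
     / (piU p u_ssbar 1%N * piU p u_sbarsbar 2%N - piU p u_ssbar 2%N * piU p u_sbarsbar 1%N)
   /\
   delta p false u_sbarsbar =
     (omega p true false false 2%N * piU p u_ssbar 1%N - omega p true false false 1%N * piU p u_ssbar 2%N)
     / (piU p u_ssbar 1%N * piU p u_sbarsbar 2%N - piU p u_ssbar 2%N * piU p u_sbarsbar 1%N)).
Proof.
move=> hp hr hm hh hZ hR.
have hb r : (r = 1%N \/ r = 2%N) -> [/\ PR p r != 0, PZR p true r != 0 & PZR p false r != 0].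
  move=> hrr; have hR' := hR r hrr.
  have [h1 h2] := PZ_bounds hp hR' (hZ r hrr).
  by split; rewrite gt_eqF.
have [nR1 nZ11 nZ01] := hb 1%N (or_introl erefl).
have [nR2 nZ12 nZ02] := hb 2%N (or_intror erefl).
split.
  move=> r hrr; have [nR nZ1 nZ0] := hb r hrr; split.
  - exact: part1a.
  - exact: part1b.
  - exact: part1c.
split.
  move=> hD hp1 hp2.
  have hp1' : 0 < Prob p [pred w | (Zv w == true) && (Uv w == u_ss)].
    by move: hp1; rewrite (@Prob_ext _ _ _ [pred w | (Zv w == true) && (Uv w == u_ss)]) //; ext_tac.
  have hp2' : 0 < Prob p [pred w | (Zv w == true) && (Uv w == u_ssbar)].
    by move: hp2; rewrite (@Prob_ext _ _ _ [pred w | (Zv w == true) && (Uv w == u_ssbar)]) //; ext_tac.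
  have nU1 := pos_U hp hp1'; have nU2 := pos_U hp hp2'.
  rewrite (delta_eq hr hh nR1 nR2 nU1 (negbT (gt_eqF hp1'))).
  rewrite (delta_eq hr hh nR1 nR2 nU2 (negbT (gt_eqF hp2'))).
  rewrite (omega1 hr hh nR1 nZ11 nU1 nU2) (omega1 hr hh nR2 nZ12 nU1 nU2) !piU_eq.
  rewrite !piU_eq in hD.
  exact: alg1.
move=> hD hp1 hp2.
have hp1' : 0 < Prob p [pred w | (Zv w == false) && (Uv w == u_ssbar)].
  by move: hp1; rewrite (@Prob_ext _ _ _ [pred w | (Zv w == false) && (Uv w == u_ssbar)]) //; ext_tac.
have hp2' : 0 < Prob p [pred w | (Zv w == false) && (Uv w == u_sbarsbar)].
  by move: hp2; rewrite (@Prob_ext _ _ _ [pred w | (Zv w == false) && (Uv w == u_sbarsbar)]) //; ext_tac.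
have nU1 := pos_U hp hp1'; have nU2 := pos_U hp hp2'.
rewrite (delta_eq hr hh nR1 nR2 nU1 (negbT (gt_eqF hp1'))).
rewrite (delta_eq hr hh nR1 nR2 nU2 (negbT (gt_eqF hp2'))).
rewrite (omega0 hr hh nR1 nZ01 nU1 nU2) (omega0 hr hh nR2 nZ02 nU1 nU2) !piU_eq.
rewrite !piU_eq in hD.
exact: alg1.
Qed.
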